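(* Let $d\geq 1$. For every integer $m\geq 2$ there exists a finite set $S$ of unit $m$-gons in $\mathbb{R}^d$ such that the hypergraph $\mathcal{H}(S)$, with vertex set $\mathbb{R}^d$ and edge set $\{X\subseteq\mathbb{R}^d\mid X \text{ is congruent in } \mathbb{R}^d \text{ to some element of } S\}$, is equivalent to the Euclidean unit distance graph on $\mathbb{R}^d$.
   Context: $\mathbb{R}^d$ carries the Euclidean norm; two subsets are congruent if one is the image of the other under a Euclidean isometry. An $m$-gon is any subset of $\mathbb{R}^d$ of cardinality exactly $m$; a unit $m$-gon is an $m$-gon containing at least one pair of points at Euclidean distance $1$. The Euclidean unit distance graph on $\mathbb{R}^d$ has vertex set $\mathbb{R}^d$ and edges the pairs $\{x,y\}$ with $\|x-y\|_2=1$. A hypergraph is a pair $(V,E)$ with $E$ a set of subsets of $V$ each of size at least $2$; a proper coloring $\varphi:V\to C$ makes no edge monochromatic; $\chi$ is the least $|C|$ admitting a proper coloring. Two hypergraphs $\mathcal{H},\mathcal{G}$ on the same vertex set are equivalent if $\chi(\mathcal{H})=\chi(\mathcal{G})$ and, for every set $C$ of that cardinality, a map $\varphi$ into $C$ is a proper coloring of $\mathcal{H}$ iff it is a proper coloring of $\mathcal{G}$. *)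

(* Defs.v *)
From HB Require Import structures.
From mathcomp Require Import all_boot all_order all_algebra.
From mathcomp Require Import boolp classical_sets reals.
Set Implicit Arguments. Unset Strict Implicit. Unset Printing Implicit Defensive.
Import Order.TTheory GRing.Theory Num.Theory.
Local Open Scope ring_scope.
Local Open Scope classical_set_scope.

Notation pt R d := 'rV[R]_d.

Definition enorm (R : realType) (d : nat) (x : pt R d) : R :=
  Num.sqrt (\sum_(i < d) (x 0 i) ^+ 2).
Definition edist (R : realType) (d : nat) (x y : pt R d) : R := enorm (x - y).

Definition isometry (R : realType) (d : nat) (g : pt R d -> pt R d) : Prop :=
  forall x y, edist (g x) (g y) = edist x y.

Definition congruent (R : realType) (d : nat) (X Y : set (pt R d)) : Prop :=
  exists g, isometry g /\ g @` Y = X.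

Definition m_gon (R : realType) (d m : nat) (X : set (pt R d)) : Prop :=
  exists f : 'I_m -> pt R d, injective f /\ X = range f.

Definition unit_m_gon (R : realType) (d m : nat) (X : set (pt R d)) : Prop :=
  m_gon m X /\ exists x y, X x /\ X y /\ edist x y = 1.

Definition hypergraph (V : Type) := set (set V).

Definition monochromatic (V C : Type) (phi : V -> C) (X : set V) : Prop :=
  forall x y, X x -> X y -> phi x = phi y.

Definition proper_coloring (V C : Type) (E : hypergraph V) (phi : V -> C) : Prop :=
  forall X, E X -> ~ monochromatic phi X.

Definition colorable (V : Type) (E : hypergraph V) (n : nat) : Prop :=
  exists phi : V -> 'I_n, proper_coloring E phi.

Definition chromatic_number (V : Type) (E : hypergraph V) (n : nat) : Prop :=
  colorable E n /\ forall k, colorable E k -> (n <= k)%N.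

Definition equivalent (V : Type) (H G : hypergraph V) : Prop :=
  exists n, chromatic_number H n /\ chromatic_number G n /\
    forall (C : finType), #|C| = n ->
      forall phi : V -> C, proper_coloring H phi <-> proper_coloring G phi.

Definition unit_distance_graph (R : realType) (d : nat) : hypergraph (pt R d) :=
  [set X | exists x y, edist x y = 1 /\ X = [set x; y]].

Definition H_of (R : realType) (d : nat) (S : seq (set (pt R d))) :
  hypergraph (pt R d) :=
  [set X | exists2 Y, Y \in S & congruent X Y].

(* Main.v *)
Require Import Defs.
From HB Require Import structures.
From mathcomp Require Import all_boot all_order all_algebra.
From mathcomp Require Import boolp classical_sets reals.
From mathcomp Require Import finmap topology discrete_topology cardinality.
From mathcomp Require Import ring lra zify.
Set Implicit Arguments. Unset Strict Implicit. Unset Printing Implicit Defensive.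
Import Order.TTheory GRing.Theory Num.Theory.
Local Open Scope ring_scope.
Local Open Scope classical_set_scope.
Section Geom.
Variables (R : realType) (d : nat).
Notation V := (pt R d).
Implicit Types (x y z b t w : V).
Local Notation iso := (@Defs.isometry R d).

Definition dot (x y : V) : R := \sum_(i < d) x 0 i * y 0 i.

Lemma dotC x y : dot x y = dot y x.
Proof. by apply: eq_bigr => i _; rewrite mulrC. Qed.
Lemma dotDl x y z : dot (x + y) z = dot x z + dot y z.
Proof. by rewrite /dot -big_split; apply: eq_bigr => i _; rewrite !mxE mulrDl. Qed.
Lemma dotNl x z : dot (- x) z = - dot x z.
Proof. by rewrite /dot -sumrN; apply: eq_bigr => i _; rewrite !mxE mulNr. Qed.
Lemma dotBl x y z : dot (x - y) z = dot x z - dot y z.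
Proof. by rewrite dotDl dotNl. Qed.
Lemma dotZl (a : R) x z : dot (a *: x) z = a * dot x z.
Proof. by rewrite /dot mulr_sumr; apply: eq_bigr => i _; rewrite !mxE mulrA. Qed.
Lemma dotDr x y z : dot z (x + y) = dot z x + dot z y.
Proof. by rewrite dotC dotDl !(dotC z). Qed.
Lemma dotBr x y z : dot z (x - y) = dot z x - dot z y.
Proof. by rewrite dotC dotBl !(dotC z). Qed.
Lemma dotZr (a : R) x z : dot z (a *: x) = a * dot z x.
Proof. by rewrite dotC dotZl dotC. Qed.
Lemma dot0l z : dot 0 z = 0.
Proof. by rewrite /dot big1 // => i _; rewrite mxE mul0r. Qed.
Lemma dotxx_ge0 x : 0 <= dot x x.
Proof. by apply: sumr_ge0 => i _; rewrite -expr2 sqr_ge0. Qed.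
Lemma dotxx_eq0 x : dot x x = 0 -> x = 0.
Proof.
move=> h; apply/rowP => i; rewrite mxE.
have : x 0 i * x 0 i = 0.
  apply: (@psumr_eq0P _ _ predT (fun i => x 0 i * x 0 i)) => //.
  by move=> j _; rewrite -expr2 sqr_ge0.
by move/eqP; rewrite mulf_eq0 orbb => /eqP.
Qed.

Lemma enormE x : enorm x = Num.sqrt (dot x x).
Proof. by rewrite /enorm /dot; congr Num.sqrt; apply: eq_bigr => i _; rewrite expr2. Qed.

Lemma edist1P x y : edist x y = 1 <-> dot (x - y) (x - y) = 1.
Proof.
rewrite /edist enormE; split => [h|->]; last exact: sqrtr1.
by rewrite -(sqr_sqrtr (dotxx_ge0 (x - y))) h expr1n.
Qed.

Lemma edist0 x y : edist x y = 0 -> x = y.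
Proof.
rewrite /edist enormE => /eqP; rewrite sqrtr_eq0 => h.
have h0 : dot (x - y) (x - y) = 0 by apply/eqP; rewrite eq_le h dotxx_ge0.
by apply/eqP; rewrite -subr_eq0; apply/eqP/dotxx_eq0.
Qed.

Lemma edist_sym x y : edist x y = edist y x.
Proof. by rewrite /edist !enormE -opprB dotNl dotC dotNl opprK. Qed.

Lemma edist_neq x y : edist x y = 1 -> x != y.
Proof. by move=> h; apply/eqP => e; move: h; rewrite e /edist enormE subrr dot0l sqrtr0 => /eqP; rewrite eq_sym oner_eq0. Qed.

Lemma iso_inj g : iso g -> injective g.
Proof.
move=> hg x y e; apply: edist0; rewrite -hg e.
by rewrite /edist enormE subrr dot0l sqrtr0.
Qed.

Lemma iso_comp f g : iso f -> iso g -> iso (f \o g).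
Proof. by move=> hf hg x y; rewrite /= hf hg. Qed.

Lemma iso_tr t : iso (fun x : V => x + t).
Proof. by move=> x y; rewrite /edist; congr enorm; rewrite opprD addrACA subrr addr0. Qed.

Definition hh (w : V) (z : V) : V := z - ((2 * dot z w) / dot w w) *: w.

Lemma hh_lin w (a b : V) : hh w a - hh w b = hh w (a - b).
Proof.
rewrite /hh dotBl mulrBr mulrBl scalerBl.
set p := _ *: w; set q := _ *: w.
by apply/rowP => i; rewrite !mxE; ring.
Qed.

Lemma hh_dot w z : dot (hh w z) (hh w z) = dot z z.
Proof.
rewrite /hh !(dotBl, dotBr, dotZl, dotZr) (dotC w z).
have [->|q0] := eqVneq (dot w w) 0; first by rewrite invr0 !mulr0 !mul0r !subr0.
by field.
Qed.

Lemma iso_hh w : iso (hh w).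
Proof. by move=> a b; rewrite /edist !enormE hh_lin hh_dot. Qed.

Lemma hh_e (i0 : 'I_d) (u : V) : dot u u = 1 ->
  hh (delta_mx 0 i0 - u) (delta_mx 0 i0) = u.
Proof.
move=> hu; set e := delta_mx 0 i0 : V; set w := e - u.
have ee : dot e e = 1.
  rewrite /dot (bigD1 i0) //= big1 ?addr0; first by rewrite mxE !eqxx mulr1.
  by move=> i /negPf ni; rewrite mxE ni andbF mul0r.
have eu : dot e u = u 0 i0.
  rewrite /dot (bigD1 i0) //= big1 ?addr0; first by rewrite mxE !eqxx mul1r.
  by move=> i /negPf ni; rewrite mxE ni andbF mul0r.
have ww : dot w w = 2 * dot e w.
  rewrite /w !(dotBl, dotBr) ee hu (dotC u e) eu; ring.
rewrite /hh -ww.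
have [w0|q0] := eqVneq (dot w w) 0.
  have w00 := dotxx_eq0 w0.
  rewrite w00 scaler0 subr0; apply/eqP; rewrite -subr_eq0 -/w w00 //.
by rewrite divff // scale1r /w opprB addrC subrK.
Qed.

Lemma place (i0 : 'I_d) x y : edist x y = 1 ->
  exists g, iso g /\ g 0 = x /\ g (delta_mx 0 i0) = y.
Proof.
move=> /edist1P; rewrite -opprB dotNl dotC dotNl opprK => hu.
exists (fun z => hh (delta_mx 0 i0 - (y - x)) z + x); split.
  exact: (iso_comp (iso_tr x) (iso_hh _)).
split; first by rewrite /hh dot0l mulr0 mul0r scale0r subr0 add0r.
by rewrite hh_e // subrK.
Qed.
End Geom.

Section Fin.
Variables (R : realType) (d : nat).
Notation V := (pt R d).
Implicit Types (x y z : V).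
Lemma proper_GP (C : Type) (phi : V -> C) :
  proper_coloring (@unit_distance_graph R d) phi <->
  forall x y, edist x y = 1 -> phi x <> phi y.
Proof.
split.
  move=> h x y e pe; apply: (h [set x; y]); first by exists x, y.
  by move=> a b [->|->] [->|->].
move=> h X [x [y [e ->]]] mono; apply: (h x y e); apply: mono; by [left|right].
Qed.

Lemma term_le_dot z (i : 'I_d) : z 0 i * z 0 i <= dot z z.
Proof.
by rewrite /dot (bigD1 i) //= lerDl; apply: sumr_ge0 => j _; rewrite -expr2 sqr_ge0.
Qed.

Let M := (2 * d).+1.
Definition fcoord x (i : 'I_d) : int := Num.floor ((2 * d)%:R * x 0 i).
Definition fcol x : {ffun 'I_d -> 'I_M} :=
  [ffun i => inord (absz (fcoord x i %% M%:Z)%Z)].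

Lemma fcol_proper x y : (1 <= d)%N -> edist x y = 1 -> fcol x != fcol y.
Proof.
move=> hd /edist1P hS; apply/negP => /eqP /ffunP hc.
have Dge1 : 1 <= d%:R :> R by rewrite ler1n.
have key i : (fcoord x i - fcoord y i = 0)%R \/ (M%:Z <= fcoord x i - fcoord y i)%R
     \/ (fcoord x i - fcoord y i <= - M%:Z)%R.
  have := hc i; rewrite !ffunE => /(congr1 (@nat_of_ord _)).
  have Mpos : (M%:Z != 0)%R by [].
  rewrite !inordK; last 2 first.
  - by rewrite -ltz_nat gez0_abs ?modz_ge0 ?ltz_pmod.
  - by rewrite -ltz_nat gez0_abs ?modz_ge0 ?ltz_pmod.
  move/(congr1 (fun n : nat => n%:Z)); rewrite !gez0_abs ?modz_ge0 // => /eqP.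
  rewrite eqz_mod_dvd => /dvdzP [q ->].
  have [->|q0] := eqVneq q 0; first by left; rewrite mul0r.
  right; rewrite /M; nia.
have fl z i : (fcoord z i)%:~R <= (2 * d)%:R * z 0 i < (fcoord z i)%:~R + 1.
  by rewrite /fcoord floor_le /= -[1]/(1%:~R) -intrD floorD1_gt.
have dpos : (0 < d%:R :> R) by lra.
have [[i hi]|allz] := pselect (exists i, fcoord x i - fcoord y i != 0).
  have [h0|[hM|hM]] := key i; first by rewrite h0 eqxx in hi.
  - have hA : (M%:R <= (fcoord x i - fcoord y i)%:~R :> R).
      by rewrite -[M%:R]/((M%:Z)%:~R : R) ler_int.
    move: hA; rewrite intrB /M -addn1 natrD natrM => hA.
    have /andP[l1 u1] := fl x i; have /andP[l2 u2] := fl y i.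
    have hd1 : 1 < x 0 i - y 0 i by nra.
    have := term_le_dot (x - y) i; rewrite hS !mxE; nra.
  - have hA : ((fcoord x i - fcoord y i)%:~R <= - M%:R :> R).
      by rewrite -[- M%:R]/((- M%:Z)%:~R : R) ler_int.
    move: hA; rewrite intrB /M -addn1 natrD natrM => hA.
    have /andP[l1 u1] := fl x i; have /andP[l2 u2] := fl y i.
    have hd1 : x 0 i - y 0 i < -1 by nra.
    have := term_le_dot (x - y) i; rewrite hS !mxE; nra.
have small i : (4 * d%:R ^+ 2) * ((x - y) 0 i * (x - y) 0 i) <= 1 :> R.
  have e0 : fcoord x i = fcoord y i.
    by apply/eqP; rewrite -subr_eq0; apply/negPn/negP => h; apply: allz; exists i.
  have /andP[l1 u1] := fl x i; have /andP[l2 u2] := fl y i.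
  move: l1 u1; rewrite e0 !mxE natrM => l1 u1; rewrite natrM in l2 u2; nra.
have : (4 * d%:R ^+ 2) * dot (x - y) (x - y) <= d%:R :> R.
  rewrite /dot mulr_sumr; apply: le_trans (ler_sum _ (fun i _ => small i)) _.
  by rewrite sumr_const card_ord.
rewrite hS; nra.
Qed.

End Fin.

Definition ordp (k : nat) : Type := 'I_k.+1.
HB.instance Definition _ k := Choice.on (ordp k).
HB.instance Definition _ k := isPointed.Build (ordp k) ord0.
Definition DT k : Type := discrete_topology (ordp k).
HB.instance Definition _ k := Topological.on (DT k).
HB.instance Definition _ k := Pointed.on (DT k).
Definition PT (V : choiceType) k : Type := prod_topology (fun _ : V => DT k).
HB.instance Definition _ V k := Topological.on (PT V k).
HB.instance Definition _ V k := isPointed.Build (PT V k) (fun _ => ord0).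

Lemma dbe (V : choiceType) k (P : V -> V -> Prop) :
 (forall s : seq V, exists c : V -> 'I_k.+1,
     forall x y, x \in s -> y \in s -> P x y -> c x != c y) ->
 exists c : V -> 'I_k.+1, forall x y, P x y -> c x != c y.
Proof.
move=> hfin.
pose T := PT V k.
have cT : compact [set: T].
  have := @tychonoff V (fun _ => DT k) (fun _ => setT) (fun _ => @finite_compact (DT k) setT (@finite_finset (ordinal k.+1) setT)).
  by congr compact; apply/seteqP; split.
move: cT; rewrite compact_In0 => /(_ _ [set p : V * V | P p.1 p.2]
   (fun p => [set c : T | (c p.1 : 'I_k.+1) != c p.2])).
case.
- exists (fun p => [set c : T | (c p.1 : 'I_k.+1) != c p.2]); last by move=> i _; rewrite setTI.
  move=> [a b] _; rewrite closedE => c /= nn; apply/negP => /eqP cab; apply: nn.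
  have Na : \forall c' \near c, c' a = c a.
    exact: (@proj_continuous V (fun _ => DT k) a c) _ (@discrete_set1 (DT k) _).
  have Nb : \forall c' \near c, c' b = c b.
    exact: (@proj_continuous V (fun _ => DT k) b c) _ (@discrete_set1 (DT k) _).
  near=> c' => /negP; apply; apply/eqP.
  by rewrite (near Na c') // (near Nb c') // cab.
- move=> D' sD'.
  have [c hc] := hfin (flatten [seq [:: p.1; p.2] | p <- D']).
  exists c => p /= pD'; have := sD' _ pD'; rewrite in_setE /= => Pp; apply: hc => //.
    by apply/flattenP; exists [:: p.1; p.2]; [apply/mapP; exists p|rewrite inE eqxx].
  by apply/flattenP; exists [:: p.1; p.2]; [apply/mapP; exists p|rewrite !inE eqxx orbT].
- move=> c hc; exists c => x y Pxy; exact: (hc (x, y)).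
Unshelve. all: by end_near.
Qed.

Definition properW (R : realType) (d : nat) (C : Type) (psi : pt R d -> C) (s : seq (pt R d)) :=
  forall x y, x \in s -> y \in s -> edist x y = 1 -> psi x <> psi y.

Lemma size_filter2 (T : eqType) (L : seq T) a b : uniq L ->
  (size L <= (size [seq v <- L | (v != a) && (v != b)]).+2)%N.
Proof.
move=> uL; rewrite size_filter -(count_predC (fun v => (v != a) && (v != b)) L).
have e : count (predC (fun v => (v != a) && (v != b))) L = count (predU (pred1 a) (pred1 b)) L.
  by apply: eq_count => v; rewrite /= negb_and !negbK.
have := count_predUI (pred1 a) (pred1 b) L.
rewrite !count_uniq_mem // e => h.
have := leq_b1 (a \in L); have := leq_b1 (b \in L); lia.
Qed.

Section Main.
Variables (R : realType) (d : nat) (i0 : 'I_d) (k m : nat) (W0 : seq (pt R d)).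
Hypothesis hW0 : forall psi : pt R d -> 'I_k.+1, ~ properW psi W0.
Hypothesis hm : (2 <= m)%N.
Notation V := (pt R d).
Local Notation iso := (@Defs.isometry R d).

Lemma all_colors (C : finType) (psi : V -> C) : (#|C| <= k.+2)%N -> properW psi W0 ->
  forall A, exists2 w, w \in W0 & psi w = A.
Proof.
move=> hC hp A; apply: contrapT => nex.
have nA w : w \in W0 -> psi w != A by move=> wW; apply/eqP => e; apply: nex; exists w.
pose r (c : C) : nat := enum_rank c.
pose f (c : C) : nat := if (r c < r A)%N then r c else (r c).-1.
have rlt c : (r c < #|C|)%N by rewrite /r ltn_ord.
have rinj c c' : r c = r c' -> c = c' by move/ord_inj/enum_rank_inj.
have rneq c : c != A -> r c <> r A by move=> cA /rinj e; rewrite e eqxx in cA.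
have fle c : c != A -> (f c <= k)%N.
  move=> cA; have := rlt c; have := rlt A; have := rneq _ cA; rewrite /f; case: ifP; lia.
have finj c c' : c != A -> c' != A -> f c = f c' -> c = c'.
  move=> cA c'A; have := rneq _ cA; have := rneq _ c'A; rewrite /f.
  by case: ifP; case: ifP => b1 b2 h1 h2 h3; apply: rinj; lia.
apply: (hW0 (psi := fun v => inord (f (psi v)))) => x y xW yW e.
move/(congr1 (@nat_of_ord _)); rewrite !inordK ?ltnS ?fle ?nA //.
by move/finj => /(_ (nA _ xW) (nA _ yW)); exact: hp x y xW yW e.
Qed.

Definition e1 : V := delta_mx 0 i0.
Definition Sig : R := \sum_(w <- W0) `|w 0 i0|.
Definition Tc : R := 1 + 2 * Sig.
Definition tr (j : nat) (w : V) : V := w + (j%:R * Tc) *: e1.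
Definition K := (k.+2 * m + m)%N.
Definition F0 : seq V := 0 :: e1 :: flatten [seq map (tr j) W0 | j <- iota 0 K].

Lemma Sig_ge w : w \in W0 -> `|w 0 i0| <= Sig.
Proof.
rewrite /Sig; elim: W0 => [//|a l IH]; rewrite in_cons big_cons => /orP[/eqP->|/IH h].
  by rewrite lerDl; apply: sumr_ge0 => *; exact: normr_ge0.
by apply: le_trans h _; rewrite lerDr normr_ge0.
Qed.

Lemma Sig_ge0 : 0 <= Sig.
Proof. by apply: sumr_ge0 => *; exact: normr_ge0. Qed.

Lemma tr_coord j w : (tr j w) 0 i0 = w 0 i0 + j%:R * Tc.
Proof. by rewrite /tr /e1 !mxE !eqxx mulr1. Qed.

Lemma tr_disj j j' w w' : w \in W0 -> w' \in W0 -> tr j w = tr j' w' -> j = j'.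
Proof.
move=> wW w'W /(congr1 (fun v : V => v 0 i0)); rewrite !tr_coord /Tc => h.
have h1 := Sig_ge wW; have h2 := Sig_ge w'W; have h0 := Sig_ge0.
have a1 := ler_norm (w 0 i0); have a2 := ler_norm (- w 0 i0).
have a3 := ler_norm (w' 0 i0); have a4 := ler_norm (- w' 0 i0).
rewrite normrN in a2; rewrite normrN in a4.
apply/eqP; case: ltngtP => // hjj.
- have : (j.+1%:R <= j'%:R :> R) by rewrite ler_nat.
  rewrite -addn1 natrD => hl.
  have hp : 0 <= (j'%:R - j%:R - 1) * (1 + 2 * Sig) by apply: mulr_ge0; lra.
  exfalso; nra.
- have : (j'.+1%:R <= j%:R :> R) by rewrite ler_nat.
  rewrite -addn1 natrD => hl.
  have hp : 0 <= (j%:R - j'%:R - 1) * (1 + 2 * Sig) by apply: mulr_ge0; lra.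
  exfalso; nra.
Qed.

Lemma tr_inF0 j w : (j < K)%N -> w \in W0 -> tr j w \in F0.
Proof.
move=> jK wW; rewrite /F0 !in_cons; apply/orP; right; apply/orP; right.
apply/flattenP; exists (map (tr j) W0); last exact: map_f.
by apply/mapP; exists j; rewrite ?mem_iota.
Qed.

Definition N := size F0.
Definition subs (J : {set 'I_N}) : set V :=
  [set v | exists2 i : 'I_N, i \in J & v = nth 0 F0 i].
Definition S : seq (set V) :=
  [seq X <- [seq subs J | J <- enum [set: {set 'I_N}]%SET] | `[< unit_m_gon m X >]].

Lemma S_gon X : X \in S -> unit_m_gon m X.
Proof. by rewrite mem_filter => /andP[/asboolP]. Qed.

Lemma HS_mem g X : iso g -> unit_m_gon m X -> X `<=` g @` [set v | v \in F0] ->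
  H_of S X.
Proof.
move=> hg [[f [finj Xf]] [x [y [Xx [Xy exy]]]]] sub.
pose II := [set i : 'I_N | `[< X (g (nth 0 F0 i)) >]]%SET.
have YE v : subs II v <-> (v \in F0 /\ X (g v)).
  split.
  - by case=> i; rewrite inE => /asboolP Xi ->; split => //; exact: mem_nth.
  - case=> vF Xv; have iv : (index v F0 < N)%N by rewrite /N index_mem.
    exists (Ordinal iv); last by rewrite nth_index.
    by rewrite inE /= nth_index //; apply/asboolP.
have gY : g @` subs II = X.
  apply/seteqP; split => z.
  - by case=> v /YE [_ Xv] <-.
  - move=> Xz; have [v vF gv] := sub z Xz; exists v => //; apply/YE; split => //.
    by rewrite gv.
exists (subs II); last by exists g.
rewrite mem_filter; apply/andP; split; last first.
  by apply: map_f; rewrite mem_enum finset.in_setT.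
apply/asboolP.
have pre : forall i : 'I_m, exists v, subs II v /\ g v = f i.
  move=> i; have Xfi : X (f i) by rewrite Xf; exists i.
  by rewrite -gY in Xfi; case: Xfi => v Yv gv; exists v.
have [f' hf'] := choice pre.
split.
  exists f'; split.
    by move=> a b e; apply: finj; rewrite -(hf' a).2 -(hf' b).2 e.
  apply/seteqP; split => v.
  - move=> Yv; have Xgv : X (g v) by rewrite -gY; exists v.
    rewrite Xf in Xgv; case: Xgv => i _ fi; exists i => //.
    by apply: (iso_inj hg); rewrite (hf' i).2 fi.
  - by case=> i _ <-; exact: (hf' i).1.
rewrite -gY in Xx Xy; case: Xx => u Yu gu; case: Xy => u' Yu' gu'.
by exists u, u'; split => //; split => //; rewrite -hg gu gu'.
Qed.

Lemma edist_e1 : edist 0 e1 = 1.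
Proof.
apply/edist1P; rewrite sub0r dotNl dotC dotNl opprK /dot (bigD1 i0) //= big1 ?addr0.
  by rewrite /e1 mxE !eqxx mulr1.
by move=> i /negPf ni; rewrite /e1 mxE ni andbF mul0r.
Qed.

Lemma mk_X (C : Type) (phi : V -> C) g (p q : V) (rest : seq V) (B : C) :
  iso g -> proper_coloring (H_of S) phi -> uniq [:: p, q & rest] ->
  (m <= (size rest).+2)%N -> edist p q = 1 ->
  (forall v, v \in [:: p, q & rest] -> (g @` [set w | w \in F0]) v /\ phi v = B) -> False.
Proof.
set s := [:: p, q & rest] => hg hp us ms epq hv.
pose f (i : 'I_m) := nth 0 s i.
have sz (i : 'I_m) : (i < size s)%N by apply: leq_trans (ltn_ord i) ms.
have finj : injective f.
  by move=> a b; rewrite /f => /eqP; rewrite nth_uniq // => /eqP/ord_inj.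
have m0 : (0 < m)%N by lia.
have m1 : (1 < m)%N by lia.
have hX : unit_m_gon m (range f).
  split; first by exists f.
  exists p, q; split; first by exists (Ordinal m0).
  by split => //; exists (Ordinal m1).
apply: (hp _ (HS_mem hg hX _)).
  by move=> z [i _ <-]; apply: (hv _ (mem_nth _ (sz i))).1.
move=> a b [i _ <-] [j _ <-].
by rewrite (hv _ (mem_nth _ (sz i))).2 (hv _ (mem_nth _ (sz j))).2.
Qed.

Lemma find_mono (C : finType) (phi : V -> C) g : iso g -> (#|C| <= k.+2)%N ->
  proper_coloring (H_of S) phi -> phi (g 0) <> phi (g e1).
Proof.
move=> hg hC hp eA.
pose h (j : 'I_K) (w : V) := g (tr j w).
have h_iso j : iso (h j) := iso_comp hg (iso_tr _).
have hF j w : w \in W0 -> (g @` [set v | v \in F0]) (h j w).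
  by move=> wW; exists (tr j w) => //; exact: tr_inF0 (ltn_ord j) wW.
have hdisj j j' w w' : w \in W0 -> w' \in W0 -> h j w = h j' w' -> j = j'.
  by move=> wW w'W /(iso_inj hg)/(tr_disj wW w'W)/ord_inj.
have e01 : edist (g 0) (g e1) = 1 by rewrite hg edist_e1.
have g0F : (g @` [set v | v \in F0]) (g 0) by exists 0 => //; change (0 \in F0); rewrite /F0 in_cons eqxx.
have g1F : (g @` [set v | v \in F0]) (g e1).
  by exists e1 => //; change (e1 \in F0); rewrite /F0 !in_cons eqxx orbT.
pose good j := `[< properW (phi \o h j) W0 >].
have [Jb|Jb] := leqP m #|[set j | good j]%SET|.
- have aw j : exists w, good j -> w \in W0 /\ phi (h j w) = phi (g 0).
    case: (boolP (good j)) => [/asboolP gj|ngj]; last by exists 0.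
    by have [w wW hw] := all_colors hC gj (phi (g 0)); exists w.
  have [a ha] := choice aw.
  pose L := [seq h j (a j) | j <- enum [set j | good j]%SET].
  pose rest := [seq v <- L | (v != g 0) && (v != g e1)].
  have uL : uniq L.
    rewrite map_inj_in_uniq ?enum_uniq // => j j'; rewrite !mem_enum !inE => gj gj'.
    exact: hdisj (ha _ gj).1 (ha _ gj').1.
  apply: (@mk_X C phi g (g 0) (g e1) rest (phi (g 0)) hg hp).
  + rewrite /= !inE !mem_filter !eqxx /= andbF /= filter_uniq // andbT.
    by rewrite orbF; apply: edist_neq.
  + have := size_filter2 (g 0) (g e1) uL; rewrite -/rest size_map -cardE; exact: leq_trans Jb.
  + exact: e01.
  + move=> v; rewrite !inE => /orP[/eqP->|/orP[/eqP->|]]; first by [].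
      by split => //; rewrite eA.
    rewrite mem_filter => /andP[_ /mapP[j]]; rewrite mem_enum inE => gj ->.
    by split; [apply: hF; exact: (ha _ gj).1|exact: (ha _ gj).2].
- have pw j : exists pr : V * V, ~~ good j ->
      [/\ pr.1 \in W0, pr.2 \in W0, edist pr.1 pr.2 = 1 & phi (h j pr.1) = phi (h j pr.2)].
    case: (boolP (good j)) => gj; first by exists (0, 0).
    have [[x [y [xW yW e ce]]]|nex] := pselect (exists x y,
        [/\ x \in W0, y \in W0, edist x y = 1 & phi (h j x) = phi (h j y)]).
      by exists (x, y).
    exfalso; move/asboolPn: gj; apply => x y xW yW e ce; apply: nex; by exists x, y; split.
  have [pr hpr] := choice pw.
  pose Ja := [set j | ~~ good j]%SET.
  have cardJa : (k.+2 * m < #|Ja|)%N.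
    have := cardsC [set j | good j]%SET; rewrite card_ord.
    have -> : (~: [set j | good j] = Ja)%SET by apply/setP => j; rewrite !inE.
    rewrite /K => e; rewrite -(ltn_add2l #|[set j | good j]%SET|) e.
    by rewrite addnC ltn_add2l.
  pose col j := phi (h j (pr j).1).
  have sumJa : #|Ja| = (\sum_(B : C) #|[set j in Ja | col j == B]%SET|)%N.
    rewrite -sum1_card (partition_big col predT) //=; apply: eq_bigr => B _.
    by rewrite -sum1_card; apply: eq_bigl => j; rewrite !inE.
  have [B hB] : exists B, (m.-1 <= #|[set j in Ja | col j == B]%SET|)%N.
    apply: contrapT => nB.
    have lt B : (#|[set j in Ja | col j == B]%SET| <= m.-2)%N.
      rewrite leqNgt; apply/negP => hh; apply: nB; exists B; lia.
    have : (#|Ja| <= #|C| * m.-2)%N.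
      by rewrite sumJa -sum_nat_const; apply: leq_sum => i _; exact: lt.
    have : (#|C| * m.-2 <= k.+2 * m)%N by apply: leq_mul => //; lia.
    lia.
  set JB := [set j in Ja | col j == B]%SET in hB.
  have [j0 j0B] : exists j0, j0 \in JB.
    by apply/set0Pn; rewrite -card_gt0; lia.
  have hJ j : j \in JB -> [/\ (pr j).1 \in W0, (pr j).2 \in W0,
      edist (pr j).1 (pr j).2 = 1, phi (h j (pr j).1) = phi (h j (pr j).2)
      & col j = B].
    rewrite !inE => /andP[nj /eqP cj]; have [? ? ? ?] := hpr j nj; by split.
  have [p1W p2W ep cp cB] := hJ _ j0B.
  pose rest := [seq h j (pr j).1 | j <- enum (JB :\ j0)%SET].
  apply: (@mk_X C phi g (h j0 (pr j0).1) (h j0 (pr j0).2) rest B hg hp).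
  + rewrite /= !inE negb_or; apply/andP; split; [apply/andP; split|apply/andP; split].
    * by apply: edist_neq; rewrite h_iso.
    * apply/mapP => -[j]; rewrite mem_enum in_setD1 => /andP[jj0 jB] e.
      have [? ? ? ? ?] := hJ _ jB; by move: jj0; rewrite (hdisj _ _ _ _ p1W _ e) ?eqxx.
    * apply/mapP => -[j]; rewrite mem_enum in_setD1 => /andP[jj0 jB] e.
      have [? ? ? ? ?] := hJ _ jB; by move: jj0; rewrite (hdisj _ _ _ _ p2W _ e) ?eqxx.
    * rewrite map_inj_in_uniq ?enum_uniq // => j j'; rewrite !mem_enum !in_setD1.
      move=> /andP[_ jB] /andP[_ j'B]; have [? ? ? ? ?] := hJ _ jB.
      have [? ? ? ? ?] := hJ _ j'B; exact: hdisj.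
  + rewrite size_map -cardE; have := cardsD1 j0 JB; rewrite j0B; lia.
  + by rewrite h_iso.
  + move=> v; rewrite !inE => /orP[/eqP->|/orP[/eqP->|]].
    * by split; [exact: hF|exact: cB].
    * by split; [exact: hF|rewrite -cp; exact: cB].
    * move=> /mapP[j]; rewrite mem_enum in_setD1 => /andP[_ jB] ->.
      have [? ? ? ? ?] := hJ _ jB; by split; [exact: hF|].
Qed.
End Main.

Theorem corollary3p1p1 (R : realType) (d m : nat) (hd : (1 <= d)%N) (hm : (2 <= m)%N) :
  exists S : seq (set (pt R d)),
    (forall X, X \in S -> unit_m_gon m X) /\
    equivalent (H_of S) (@unit_distance_graph R d).
Proof.
set G := @unit_distance_graph R d.
pose i0 : 'I_d := Ordinal hd.
have ex : exists k, `[< colorable G k >].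
  exists #|{ffun 'I_d -> 'I_(2 * d).+1}|; apply/asboolP.
  exists (fun x => enum_rank (fcol x)).
  apply/proper_GP => x y e h.
  by move: (fcol_proper hd e); rewrite (enum_rank_inj h) eqxx.
pose n := ex_minn ex.
have [coln minn] : colorable G n /\ forall k, colorable G k -> (n <= k)%N.
  rewrite /n; case: ex_minnP => n0 /asboolP c0 mn; split => // k ck.
  by apply: mn; apply/asboolP.
have n2 : (2 <= n)%N.
  case: coln => c /proper_GP hc; rewrite leqNgt; apply/negP => n1.
  apply: (hc 0 (@e1 R d i0) (@edist_e1 R d i0)); apply/ord_inj.
  have := ltn_ord (c 0); have := ltn_ord (c (@e1 R d i0)); lia.
have [k hk] : exists k, n = k.+2 by exists n.-2; lia.
have [W0 hW0] : exists W0 : seq (pt R d), forall psi : pt R d -> 'I_k.+1, ~ properW psi W0.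
  apply: contrapT => nW.
  have : colorable G k.+1 -> False by move/minn; lia.
  have hfin : forall s : seq (pt R d), exists c : pt R d -> 'I_k.+1,
      forall x y, x \in s -> y \in s -> edist x y = 1 -> c x != c y.
    move=> s; apply: contrapT => ns; apply: nW; exists s => psi hpsi; apply: ns.
    by exists psi => x y xs ys e; apply/eqP; exact: hpsi.
  have [c hc] := dbe hfin; apply.
  by exists c; apply/proper_GP => x y e; apply/eqP; exact: hc.
have HtoG (C : finType) (phi : pt R d -> C) : (#|C| <= k.+2)%N ->
    proper_coloring (H_of (S i0 k m W0)) phi -> proper_coloring G phi.
  move=> hC hp; apply/proper_GP => x y e exy.
  have [g [hg [g0 g1]]] := place i0 e.
  apply: (find_mono hW0 hm hg hC hp); rewrite /e1 g0 g1; exact: exy.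
have GtoH (C : Type) (phi : pt R d -> C) :
    proper_coloring G phi -> proper_coloring (H_of (S i0 k m W0)) phi.
  move=> /proper_GP hG X [Y YS [g [hg gY]]] mono.
  have [_ [u [v [Yu [Yv euv]]]]] := S_gon YS.
  apply: (hG (g u) (g v)); first by rewrite hg.
  by apply: mono; rewrite -gY; [exists u|exists v].
exists (S i0 k m W0); split; first exact: S_gon.
exists n; split; [|split].
- split.
    by case: coln => c hc; exists c; exact: GtoH.
  move=> k' [c hc]; rewrite leqNgt; apply/negP => lt.
  have : colorable G k' by exists c; apply: HtoG => //; rewrite card_ord; lia.
  by move/minn; lia.
- by split.
- move=> C hC phi; split; last exact: GtoH.
  by apply: HtoG; lia.
Qed.
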